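(* Let $A$ be a linearly ordered set, $a\in A$, and $H$ a passable game over $A$. Then (a) $[a]\lhd H$ or $H\le[a]$; and (b) $H\lhd[a]$ or $[a]\le H$.
   Context: Games over a poset $A$ are defined inductively: for each $a\in A$ there is an atomic game $[a]$, which has no options; and if $L$ and $R$ are non-empty sets of games, then $\{L\mid R\}$ is a composite game with left options $L$ and right options $R$. The relations $\le$ and $\lhd$ are defined by simultaneous recursion: $G\le H$ iff (1) every left option $G^L$ of $G$ satisfies $G^L\lhd H$, (2) every right option $H^R$ of $H$ satisfies $G\lhd H^R$, and (3) if $G$ or $H$ is atomic then $G\lhd H$; and $G\lhd H$ iff (1) some right option $G^R$ of $G$ satisfies $G^R\le H$, or (2) some left option $H^L$ of $H$ satisfies $G\le H^L$, or (3) $G=[a]$, $H=[b]$ are atomic and $a\le b$. A game $G$ is passable if $G\lhd G$ and recursively all its options are passable. *)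

(* Defs.v *)
From HB Require Import structures.
From mathcomp Require Import all_boot all_order.
Set Implicit Arguments. Unset Strict Implicit. Unset Printing Implicit Defensive.
Import Order.TTheory.
Local Open Scope order_scope.

(* Games over a poset A.  A composite game {L | R} is given by two non-empty
   families of options (indexed by arbitrary types IL, IR). *)
Inductive game (d : Order.disp_t) (A : porderType d) : Type :=
  | Atom : A -> game A
  | Comp : forall (IL : Type), (IL -> game A) -> inhabited IL ->
           forall (IR : Type), (IR -> game A) -> inhabited IR -> game A.

Arguments Atom {d A} a.
Arguments Comp {d A IL} L hL {IR} R hR.

Definition is_atom d (A : porderType d) (G : game A) : Prop :=
  match G with Atom _ => True | Comp _ _ _ _ _ _ => False end.

Fixpoint cmp d (A : porderType d) (G : game A) {struct G} : game A -> Prop * Prop :=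
  fix cmpG (H : game A) {struct H} : Prop * Prop :=
    let lhdGH : Prop :=
      (match G with
       | Atom _ => False
       | Comp _ _ _ _ GR _ => exists j, (cmp (GR j) H).1
       end) \/
      (match H with
       | Atom _ => False
       | Comp _ HL _ _ _ _ => exists i, (cmpG (HL i)).1
       end) \/
      (match G, H with
       | Atom a, Atom b => a <= b
       | _, _ => False
       end) in
    let leGH : Prop :=
      (match G with
       | Atom _ => True
       | Comp _ GL _ _ _ _ => forall i, (cmp (GL i) H).2
       end) /\
      (match H with
       | Atom _ => True
       | Comp _ _ _ _ HR _ => forall j, (cmpG (HR j)).2
       end) /\
      ((is_atom G \/ is_atom H) -> lhdGH) in
    (leGH, lhdGH).

Definition gle d (A : porderType d) (G H : game A) : Prop := (cmp G H).1.
Definition glhd d (A : porderType d) (G H : game A) : Prop := (cmp G H).2.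

Fixpoint passable d (A : porderType d) (G : game A) : Prop :=
  glhd G G /\
  match G with
  | Atom _ => True
  | Comp _ GL _ _ GR _ => (forall i, passable (GL i)) /\ (forall j, passable (GR j))
  end.

(* Main.v *)
Require Import Defs.
From mathcomp Require Import all_boot all_order.
From Stdlib Require Import Classical.
Import Order.TTheory.
Local Open Scope order_scope.

Definition lopt {d} {A : porderType d} (G K : game A) : Prop :=
  match G with Atom _ => False | Comp _ L _ _ _ _ => exists i, K = L i end.
Definition ropt {d} {A : porderType d} (G K : game A) : Prop :=
  match G with Atom _ => False | Comp _ _ _ _ R _ => exists j, K = R j end.

Lemma glhd_eq d (A : porderType d) (G H : game A) :
  glhd G H =
      ((match G with
       | Atom _ => False
       | Comp _ _ _ _ GR _ => exists j, gle (GR j) H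
       end) \/
      (match H with
       | Atom _ => False
       | Comp _ HL _ _ _ _ => exists i, gle G (HL i)
       end) \/
      (match G, H with
       | Atom a, Atom b => a <= b
       | _, _ => False
       end)).
Proof. by case: G; case: H. Qed.

Lemma gle_eq d (A : porderType d) (G H : game A) :
  gle G H =
      ((match G with
       | Atom _ => True
       | Comp _ GL _ _ _ _ => forall i, glhd (GL i) H
       end) /\
      (match H with
       | Atom _ => True
       | Comp _ _ _ _ HR _ => forall j, glhd G (HR j)
       end) /\
      ((is_atom G \/ is_atom H) -> glhd G H)).
Proof. by case: G; case: H. Qed.

Lemma gle_char d (A : porderType d) (G H : game A) :
  gle G H <-> (forall K, lopt G K -> glhd K H) /\ (forall K, ropt H K -> glhd G K)
     /\ (is_atom G \/ is_atom H -> glhd G H).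
Proof.
rewrite gle_eq /lopt /ropt.
case: G => [a|IL L hL IR R hR]; case: H => [b|IL' L' hL' IR' R' hR'];
cbv beta iota zeta; split.
all: try (case=> h1 [h2 h3]; split; [|split]; [ first [ move=> K [i ->]; exact: h1 | move=> K [] ] | first [ move=> K [j ->]; exact: h2 | move=> K [] ] | exact: h3 ]).
all: try (case=> h1 [h2 h3]; split; [|split]; [ first [ by [] | move=> i; exact: (h1 _ (ex_intro _ i erefl)) ] | first [ by [] | move=> i; exact: (h2 _ (ex_intro _ i erefl)) ] | exact: h3 ]).
Qed.

Lemma glhd_char d (A : porderType d) (G H : game A) :
  glhd G H <-> (exists K, ropt G K /\ gle K H) \/ (exists K, lopt H K /\ gle G K)
     \/ (exists a b, G = Atom a /\ H = Atom b /\ a <= b).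
Proof.
rewrite glhd_eq /lopt /ropt.
case: G => [a|IL L hL IR R hR]; case: H => [b|IL' L' hL' IR' R' hR'];
cbv beta iota zeta; split.
all: try (firstorder (subst; eauto); fail).
all: try (move=> [[K [[] _]]|[[K [[] _]]|[x [y [[<-] [[<-] l]]]]]]; tauto).
all: intros [[K [HK h]]|[[K [HK h]]|[x [y [e1 [e2 l]]]]]]; try discriminate; try contradiction; try (destruct HK as [? ->]); firstorder.
Qed.

Definition opt {d} {A : porderType d} (G K : game A) := lopt G K \/ ropt G K.

Lemma game_opt_ind d (A : porderType d) (Q : game A -> Prop) :
  (forall G, (forall K, opt G K -> Q K) -> Q G) -> forall G, Q G.
Proof.
move=> step; elim=> [a|IL L IHL hL IR R IHR hR]; apply: step => K.
  by case=> [[]|[]].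
by case=> [[i ->]|[j ->]].
Qed.

Definition P3 {d} {A : porderType d} (X Y Z : game A) :=
  (gle X Y -> gle Y Z -> gle X Z) /\ (glhd X Y -> gle Y Z -> glhd X Z)
  /\ (gle X Y -> glhd Y Z -> glhd X Z).

Lemma gle_AA d (A : porderType d) (a b : A) : a <= b -> gle (Atom a) (Atom b).
Proof. move=> h; rewrite gle_eq /=; split=> //; split=> //; rewrite glhd_eq /=; tauto. Qed.

Lemma trans3 d (A : porderType d) (X Y Z : game A) : P3 X Y Z.
Proof.
move: Y Z; elim/game_opt_ind: X => X IHX Y.
elim/game_opt_ind: Y => Y IHY Z.
elim/game_opt_ind: Z => Z IHZ.
have ii : glhd X Y -> gle Y Z -> glhd X Z.
  move=> /glhd_char [[K [oK hK]]|[[K [oK hK]]|[a [b [eX [eY ab]]]]]] YZ.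
  - apply/glhd_char; left; exists K; split=> //.
    by apply: (proj1 (IHX K (or_intror oK) Y Z)).
  - have KZ : glhd K Z by move/gle_char: (YZ) => [h _]; exact: h.
    by apply: (proj2 (proj2 (IHY K (or_introl oK) Z))).
  - have YZ' : glhd Y Z by move/gle_char: (YZ) => [_ [_ h]]; apply: h; left; rewrite eY.
    move/glhd_char: YZ' => [[K [oK _]]|[[K [oK hK]]|[b' [c [eY' [eZ bc]]]]]].
    + by move: oK; rewrite eY.
    + apply/glhd_char; right; left; exists K; split=> //.
      apply: (proj1 (IHZ K (or_introl oK))) hK.
      by rewrite eX eY; apply: gle_AA.
    + apply/glhd_char; right; right; exists a, c; split=> //; split=> //.
      move: eY'; rewrite eY => -[eb]; subst; exact: le_trans ab bc.
have iii : gle X Y -> glhd Y Z -> glhd X Z.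
  move=> XY /glhd_char [[K [oK hK]]|[[K [oK hK]]|[b [c [eY [eZ bc]]]]]].
  - have XK : glhd X K by move/gle_char: (XY) => [_ [h _]]; exact: h.
    by apply: (proj1 (proj2 (IHY K (or_intror oK) Z))).
  - apply/glhd_char; right; left; exists K; split=> //.
    by apply: (proj1 (IHZ K (or_introl oK))).
  - have XY' : glhd X Y by move/gle_char: (XY) => [_ [_ h]]; apply: h; right; rewrite eY.
    move/glhd_char: XY' => [[K [oK hK]]|[[K [oK _]]|[a [b' [eX [eY' ab]]]]]].
    + apply/glhd_char; left; exists K; split=> //.
      apply: (proj1 (IHX K (or_intror oK) Y Z)) hK _.
      by rewrite eY eZ; apply: gle_AA.
    + by move: oK; rewrite eY.
    + apply/glhd_char; right; right; exists a, c; split=> //; split=> //.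
      move: eY'; rewrite eY => -[eb]; subst; exact: le_trans ab bc.
rewrite /P3; split; last by split. move=> XY YZ.
apply/gle_char; split; [|split].
- move=> K oK; have KY : glhd K Y by move/gle_char: (XY) => [h _]; exact: h.
  by apply: (proj1 (proj2 (IHX K (or_introl oK) Y Z))).
- move=> K oK; have YK : glhd Y K by move/gle_char: (YZ) => [_ [h _]]; exact: h.
  by apply: (proj2 (proj2 (IHZ K (or_intror oK)))).
- case=> hat.
  + apply: ii _ YZ; move/gle_char: (XY) => [_ [_ h]]; apply: h; left; exact: hat.
  + apply: (iii XY); move/gle_char: (YZ) => [_ [_ h]]; apply: h; right; exact: hat.
Qed.

Arguments trans3 {d A}.

Lemma key d (A : porderType d) (a : A) IL (L : IL -> game A) hL IR (R : IR -> game A) hR :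
  glhd (Comp L hL R hR) (Comp L hL R hR) ->
  (forall i, glhd (L i) (Atom a)) -> (forall j, glhd (Atom a) (R j)) ->
  (exists i, gle (Atom a) (L i)) \/ (exists j, gle (R j) (Atom a)).
Proof.
set H := Comp L hL R hR => HH hLa hRa.
move/glhd_char: HH => [[K [[j eK] hK]]|[[K [[i eK] hK]]|[x [y [e _]]]]] //.
- left; subst K.
  have := (proj1 (proj2 (trans3 (Atom a) (R j) H)) (hRa j) hK).
  move/glhd_char => [[K [[] _]]|[[K [[i eK] hK']]|[x [y [_ [e _]]]]]] //.
  by exists i; rewrite -eK.
- right; subst K.
  have := (proj2 (proj2 (trans3 H (L i) (Atom a))) hK (hLa i)).
  move/glhd_char => [[K [[j eK] hK']]|[[K [[] _]]|[x [y [e _]]]]] //.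
  by exists j; rewrite -eK.
Qed.

Arguments key {d A} a {IL L hL IR R hR}.

Theorem lemma7p1 (d : Order.disp_t) (A : orderType d) (a : A) (H : game A) :
  passable H ->
  (glhd (Atom a) H \/ gle H (Atom a)) /\ (glhd H (Atom a) \/ gle (Atom a) H).
Proof.
elim: H => [b|IL L IHL hL IR R IHR hR].
  move=> _; case/orP: (le_total a b) => ab.
  - by split; [left|right]; [apply/glhd_char; right; right; exists a, b | apply: gle_AA].
  - by split; [right|left]; [apply: gle_AA | apply/glhd_char; right; right; exists b, a].
move=> [HH [pL pR]].
have Lc : forall i, glhd (L i) (Atom a) \/ gle (Atom a) (L i) by move=> i; exact: (proj2 (IHL i (pL i))).
have Rc : forall j, glhd (Atom a) (R j) \/ gle (R j) (Atom a) by move=> j; exact: (proj1 (IHR j (pR j))).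
have gl : (exists i, gle (Atom a) (L i)) -> glhd (Atom a) (Comp L hL R hR).
  by move=> [i hi]; apply/glhd_char; right; left; exists (L i); split=> //; exists i.
have gr : (exists j, gle (R j) (Atom a)) -> glhd (Comp L hL R hR) (Atom a).
  by move=> [j hj]; apply/glhd_char; left; exists (R j); split=> //; exists j.
have E : (exists i, gle (Atom a) (L i)) \/ (exists j, gle (R j) (Atom a)).
  case: (classic (exists i, gle (Atom a) (L i))) => [|nL]; first by left.
  case: (classic (exists j, gle (R j) (Atom a))) => [|nR]; first by right.
  apply: (key a HH).
  - move=> i; case: (Lc i) => // h; case: nL; by exists i.
  - move=> j; case: (Rc j) => // h; case: nR; by exists j.
case: (classic (exists i, gle (Atom a) (L i))) => [eL|nL].
  split; first by left; apply: gl.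
  case: (classic (exists j, gle (R j) (Atom a))) => [eR|nR]; first by left; apply: gr.
  right; apply/gle_char; split; [by move=> K []|split].
  - move=> K [j ->]; case: (Rc j) => // h; case: nR; by exists j.
  - by move=> _; apply: gl.
case: E => [//|eR].
split; last by left; apply: gr.
right; apply/gle_char; split; [|split].
- move=> K [i ->]; case: (Lc i) => // h; case: nL; by exists i.
- by move=> K [].
- by move=> _; apply: gr.
Qed.
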